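(* Let $\mathcal E$ be a finite dimensional Hilbert space, $A$ a self-adjoint operator and $B$ a positive contraction on $\mathcal E$, and let $\zeta(z)=\frac{z+1}{z-1}$ for $z\in\mathbb D$. Then $iA+\zeta(z)B-I$ is invertible for every $z\in\mathbb D$, and the function $\psi(z)=(iA+\zeta(z)B+I)(iA+\zeta(z)B-I)^{-1}$ belongs to $\mathcal C$ and satisfies $$0\ge\operatorname{Re}\big[(\psi(z)+I)(\psi(z)-I)^{-1}\big]\ge\operatorname{Re}\big[(z+1)(z-1)^{-1}\big]I\quad\text{for all }z\in\mathbb D.$$
   Context: $\mathbb D$ is the open unit disc. $\mathcal C=\{\psi\in H^\infty_{\mathbb D}(\mathcal B(\mathcal E)):\sup_z\|\psi(z)\|\le1,\ 1\text{ is not an eigenvalue of }\psi(z)\text{ for any }z\in\mathbb D\}$. For an operator $X$, $\operatorname{Re}X=(X+X^* )/2$, and inequalities between self-adjoint operators are in the usual operator order. *)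

(* Defs.v *)
From mathcomp Require Import all_boot all_order all_algebra.
From mathcomp Require Import complex.
From mathcomp Require Import all_classical all_reals all_analysis.
Import GRing.Theory Num.Theory.
Import numFieldNormedType.Exports.
Set Implicit Arguments. Unset Strict Implicit. Unset Printing Implicit Defensive.
Local Open Scope ring_scope.
Local Open Scope complex_scope.

Notation Cx R := (R[i]).

Definition adj (R : realType) (m k : nat) (X : 'M[Cx R]_(m, k)) : 'M[Cx R]_(k, m) :=
  (map_mx conjc X)^T.

Definition selfadj (R : realType) (n : nat) (X : 'M[Cx R]_n) : Prop := adj X = X.

Definition psd (R : realType) (n : nat) (X : 'M[Cx R]_n) : Prop :=
  forall v : 'cV[Cx R]_n, 0 <= (adj v *m X *m v) 0 0.

Definition ople (R : realType) (n : nat) (X Y : 'M[Cx R]_n) : Prop := psd (Y - X).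

Definition ReOp (R : realType) (n : nat) (X : 'M[Cx R]_n) : 'M[Cx R]_n :=
  (2%:R)^-1 *: (X + adj X).

Definition vnorm2 (R : realType) (n : nat) (v : 'cV[Cx R]_n) : Cx R :=
  \sum_(i < n) `|v i 0| ^+ 2.

Definition opnorm_le1 (R : realType) (n : nat) (X : 'M[Cx R]_n) : Prop :=
  forall v : 'cV[Cx R]_n, vnorm2 (X *m v) <= vnorm2 v.

Definition pos_contraction (R : realType) (n : nat) (B : 'M[Cx R]_n) : Prop :=
  psd B /\ opnorm_le1 B.

Definition in_disc (R : realType) (z : Cx R) : Prop := `|z| < 1.

(* holomorphic on D: complex differentiable at every point of D
   (the domain (Cx R)^o is a normed space over Cx R, so [derivable f z 1]
   is existence of lim_{h -> 0, h in C} (f (z + h) - f z) / h). *)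
Definition holo_disc (R : realType) (n : nat) (f : (Cx R)^o -> 'M[Cx R]_n) : Prop :=
  forall z, in_disc z -> derivable f z 1.

(* the class C: psi in H^infty_D(B(E)), sup_z ||psi z|| <= 1,
   and 1 is not an eigenvalue of psi z for any z in D *)
Definition classC (R : realType) (n : nat) (psi : (Cx R)^o -> 'M[Cx R]_n) : Prop :=
  holo_disc psi /\
  (forall z, in_disc z -> opnorm_le1 (psi z)) /\
  (forall z, in_disc z -> ~~ eigenvalue (psi z) 1).

Definition zeta (R : realType) (z : Cx R) : Cx R := (z + 1) / (z - 1).

(* Main.v *)
Require Import Defs.
From mathcomp Require Import all_boot all_order all_algebra.
From mathcomp Require Import complex.
From mathcomp Require Import all_classical all_reals all_analysis.
From mathcomp Require Import ring.
Import GRing.Theory Num.Theory.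
Import numFieldNormedType.Exports.
Local Open Scope ring_scope.
Local Open Scope complex_scope.

Module Helpers.
Import Order.TTheory.
Set Implicit Arguments. Unset Strict Implicit.
Section Sc.
Variable R : realType.
Local Notation K := (Cx R).

Lemma cD (x y : K) : conjc (x + y) = conjc x + conjc y.
Proof. exact: rmorphD. Qed.
Lemma cM (x y : K) : conjc (x * y) = conjc x * conjc y.
Proof. exact: rmorphM. Qed.
Lemma cB (x y : K) : conjc (x - y) = conjc x - conjc y.
Proof. exact: rmorphB. Qed.
Lemma cN (x : K) : conjc (- x) = - conjc x.
Proof. exact: rmorphN. Qed.
Lemma cV (x : K) : conjc (x^-1) = (conjc x)^-1.
Proof. exact: fmorphV. Qed.
Lemma c1 : conjc (1 : K) = 1.
Proof. exact: rmorph1. Qed.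

Lemma conjc_ge0 (x : K) : 0 <= x -> (conjc x) = x.
Proof.
move/ger0_Im; case: x => a b /= ->.
by apply/eqP; rewrite eq_complex /= oppr0 !eqxx.
Qed.

Lemma conjc_i : conjc (Num.imaginary : K) = - Num.imaginary.
Proof. by change (conjc ('i%C : K) = - 'i%C); apply/eqP; rewrite eq_complex /= oppr0 !eqxx. Qed.

Lemma disc_neq1 (z : K) : `|z| < 1 -> z - 1 != 0.
Proof.
move=> hz; rewrite subr_eq0; apply/eqP => z1; move: hz; rewrite z1 normr1.
by rewrite Order.POrderTheory.ltxx.
Qed.

Lemma zeta_re (z : K) : `|z| < 1 -> zeta z + (conjc (zeta z)) <= 0.
Proof.
move=> hz; have h1 := disc_neq1 hz.
have h2 : (conjc z) - 1 != 0.
  by rewrite -conjc1 -(rmorphB conjc) conjc_eq0.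
have E : zeta z + (conjc (zeta z)) =
   (2%:R * (z * (conjc z) - 1)) * ((z - 1) * (conjc (z - 1)))^-1.
  rewrite /zeta cM cV cD cB c1.
  field.
  by rewrite h1 h2.
rewrite E; apply: mulr_le0_ge0; last first.
  by rewrite invr_ge0 -sqr_normc exprn_ge0.
apply: mulr_ge0_le0; first by rewrite ler0n.
rewrite subr_le0 -sqr_normc; apply: ltW.
by rewrite exprn_ilt1.
Qed.

End Sc.

Section Alg.
Variables (R : realType) (n : nat).
Local Notation K := (Cx R).
Implicit Types (X Y : 'M[K]_n) (v w : 'cV[K]_n).

Definition fm v X := (adj v *m X *m v) 0 0.

Lemma adjD m k (X Y : 'M[K]_(m,k)) : adj (X + Y) = adj X + adj Y.
Proof. by rewrite /adj map_mxD linearD. Qed.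
Lemma adjN m k (X : 'M[K]_(m,k)) : adj (- X) = - adj X.
Proof. by rewrite /adj map_mxN linearN. Qed.
Lemma adjB m k (X Y : 'M[K]_(m,k)) : adj (X - Y) = adj X - adj Y.
Proof. by rewrite adjD adjN. Qed.
Lemma adjM m k l (X : 'M[K]_(m,k)) (Y : 'M[K]_(k,l)) : adj (X *m Y) = adj Y *m adj X.
Proof. by rewrite /adj map_mxM trmx_mul. Qed.
Lemma adjK m k (X : 'M[K]_(m,k)) : adj (adj X) = X.
Proof. by apply/matrixP=> i j; rewrite /adj !mxE conjcK. Qed.
Lemma adj1 : adj (1 : 'M[K]_n) = 1.
Proof. by rewrite /adj map_mx1 trmx1. Qed.
Lemma adjZ m k c (X : 'M[K]_(m,k)) : adj (c *: X) = (conjc c) *: adj X.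
Proof. by apply/matrixP=> i j; rewrite /adj !mxE rmorphM. Qed.
Lemma adj11 (X : 'M[K]_1) : adj X 0 0 = (conjc (X 0 0)).
Proof. by rewrite /adj !mxE. Qed.

Lemma fmD v X Y : fm v (X + Y) = fm v X + fm v Y.
Proof. by rewrite /fm mulmxDr mulmxDl mxE. Qed.
Lemma fmN v X : fm v (- X) = - fm v X.
Proof. by rewrite /fm mulmxN mulNmx mxE. Qed.
Lemma fmB v X Y : fm v (X - Y) = fm v X - fm v Y.
Proof. by rewrite fmD fmN. Qed.
Lemma fmZ v c X : fm v (c *: X) = c * fm v X.
Proof. by rewrite /fm -scalemxAr -scalemxAl mxE. Qed.
Lemma fm0 v : fm v 0 = 0.
Proof. by rewrite /fm mulmx0 mul0mx mxE. Qed.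
Lemma fm_adj v X : fm v (adj X) = (conjc (fm v X)).
Proof. by rewrite /fm -adj11 !adjM adjK mulmxA. Qed.

Lemma vnorm2E v : vnorm2 v = (adj v *m v) 0 0.
Proof.
rewrite /vnorm2 mxE; apply: eq_bigr => i _.
by rewrite sqr_normc /adj !mxE mulrC.
Qed.
Lemma fm1 v : fm v 1 = vnorm2 v.
Proof. by rewrite /fm mulmx1 vnorm2E. Qed.
Lemma vnorm2M X w : vnorm2 (X *m w) = fm w (adj X *m X).
Proof. by rewrite vnorm2E adjM /fm !mulmxA. Qed.
Lemma vnorm2_ge0 v : 0 <= vnorm2 v.
Proof. by apply: sumr_ge0 => i _; rewrite exprn_ge0. Qed.
Lemma vnorm2_eq0 v : vnorm2 v = 0 -> v = 0.
Proof.
move=> /eqP; rewrite psumr_eq0; last by move=> i _; rewrite exprn_ge0.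
move=> /allP H; apply/matrixP => i j; rewrite (ord1 j) mxE.
have := H i (mem_index_enum _); rewrite /= sqrf_eq0 normr_eq0 => /eqP ->//.
Qed.

Lemma vnorm2_p1 X w : vnorm2 ((X + 1) *m w) =
  vnorm2 (X *m w) + (fm w X + (conjc (fm w X))) + vnorm2 w.
Proof.
rewrite !vnorm2M adjD adj1 mulmxDl (mulmxDr (adj X)) mul1mx mulmx1.
rewrite !fmD fm_adj fm1 -!addrA; congr (_ + _).
by rewrite addrCA.
Qed.
Lemma vnorm2_m1 X w : vnorm2 ((X - 1) *m w) =
  vnorm2 (X *m w) - (fm w X + (conjc (fm w X))) + vnorm2 w.
Proof.
rewrite !vnorm2M adjB adj1 mulmxBl (mulmxBr (adj X)) mul1mx mulmx1.
rewrite !fmB fm_adj fm1; ring.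
Qed.


Variables (A B : 'M[K]_n).
Hypotheses (hA : selfadj A) (hB : pos_contraction B).

Lemma fm_A_conj v : (conjc (fm v A)) = fm v A.
Proof. by rewrite -fm_adj hA. Qed.
Lemma fm_B_conj v : (conjc (fm v B)) = fm v B.
Proof. by rewrite conjc_ge0 //; case: hB => h _; exact: h. Qed.
Lemma fm_B_ge0 v : 0 <= fm v B.
Proof. by case: hB => h _; exact: h. Qed.
Lemma vnorm2_conj v : (conjc (vnorm2 v)) = vnorm2 v.
Proof. by rewrite conjc_ge0 // vnorm2_ge0. Qed.

Lemma fm_B_le v : fm v B <= vnorm2 v.
Proof.
case: hB => _ hc.
have h0 := vnorm2_ge0 ((B - 1) *m v).
rewrite vnorm2_m1 fm_B_conj in h0.
have h1 := hc v.
rewrite -subr_ge0.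
have h2 : 0 <= (vnorm2 v - vnorm2 (B *m v)) + (vnorm2 (B *m v) - (fm v B + fm v B) + vnorm2 v).
  by apply: addr_ge0 => //; rewrite subr_ge0.
have -> : vnorm2 v - fm v B = 2%:R^-1 * ((vnorm2 v - vnorm2 (B *m v)) + (vnorm2 (B *m v) - (fm v B + fm v B) + vnorm2 v)).
  by field.
by rewrite mulr_ge0 // invr_ge0 ler0n.
Qed.

Variable z : K.
Hypothesis hz : in_disc z.
Let T := 'i *: A + zeta z *: B.
Let rho := zeta z + (conjc (zeta z)).

Lemma rho_le0 : rho <= 0.
Proof. exact: zeta_re. Qed.

Lemma fmT v : fm v T + (conjc (fm v T)) = rho * fm v B.
Proof.
rewrite /T fmD !fmZ /rho; set c := zeta z.
rewrite cD !cM fm_A_conj fm_B_conj conjc_i.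
ring.
Qed.

Lemma fmT_le0 v : fm v T + (conjc (fm v T)) <= 0.
Proof. by rewrite fmT; apply: mulr_le0_ge0; [exact: rho_le0|exact: fm_B_ge0]. Qed.

Lemma fm_Re v X : fm v (ReOp X) = 2%:R^-1 * (fm v X + conjc (fm v X)).
Proof. by rewrite /ReOp fmZ fmD fm_adj. Qed.

Let S := T - 1.

Lemma S_unit : S \in unitmx.
Proof.
rewrite unitmxE unitfE -det_tr; apply/negP => /det0P [u u0 hu].
set v := u^T.
have Sv : S *m v = 0 by rewrite /v -(trmxK S) -trmx_mul hu trmx0.
have h : fm v S = 0 by rewrite /fm -mulmxA Sv mulmx0 mxE.
move: h; rewrite /S fmB fm1 => /eqP; rewrite subr_eq0 => /eqP hT.
have := fmT_le0 v; rewrite hT vnorm2_conj => hle.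
have hN : vnorm2 v = 0.
  apply/eqP; rewrite eq_le vnorm2_ge0 andbT.
  have -> : vnorm2 v = 2%:R^-1 * (vnorm2 v + vnorm2 v) by field.
  by apply: mulr_ge0_le0 => //; rewrite invr_ge0 ler0n.
move/vnorm2_eq0: hN => hv.
by move: u0; rewrite -(trmxK u) -/v hv trmx0 eqxx.
Qed.

Let Si := invmx S.
Let psi := (T + 1) *m Si.

Lemma SSi : S *m Si = 1. Proof. exact: mulmxV S_unit. Qed.
Lemma SiS : Si *m S = 1. Proof. exact: mulVmx S_unit. Qed.

Lemma two_diff (X : 'M[K]_n) : X + 1 - (X - 1) = (2%:R : K) *: (1 : 'M[K]_n).
Proof. by rewrite opprB addrA -(addrA X) addrAC subrr add0r scaler_nat mulr2n. Qed.

Lemma psi_m1 : psi - 1 = 2%:R *: Si.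
Proof.
have -> : psi - 1 = (T + 1) *m Si - S *m Si by rewrite SSi.
by rewrite -mulmxBl /S two_diff -scalemxAl mul1mx.
Qed.

Lemma psi_p1 : psi + 1 = (2%:R *: T) *m Si.
Proof.
have -> : psi + 1 = (T + 1) *m Si + S *m Si by rewrite SSi.
rewrite -mulmxDl /S; congr (_ *m _).
by rewrite addrACA subrr addr0 scaler_nat mulr2n.
Qed.

Lemma W_eq : (psi + 1) *m invmx (psi - 1) = T.
Proof.
have h2 : (2%:R : K) \is a GRing.unit by rewrite unitfE pnatr_eq0.
rewrite psi_p1 psi_m1 invmxZ; last by rewrite unitmxZ // unitmx_inv S_unit.
rewrite /Si invmxK -!scalemxAl -scalemxAr scalerA mulrC mulVf ?pnatr_eq0 //.
by rewrite scale1r -mulmxA -/Si SiS mulmx1.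
Qed.

Lemma ReW_le0 : ople (ReOp ((psi + 1) *m invmx (psi - 1))) 0.
Proof.
rewrite W_eq => v; change (0 <= fm v (0 - ReOp T)).
rewrite fmB fm0 sub0r fm_Re oppr_ge0.
by apply: mulr_ge0_le0; [rewrite invr_ge0 ler0n | exact: fmT_le0].
Qed.

Lemma ReW_ge : ople (ReOp (zeta z)%:M) (ReOp ((psi + 1) *m invmx (psi - 1))).
Proof.
rewrite W_eq => v; change (0 <= fm v (ReOp T - ReOp (zeta z)%:M)).
rewrite fmB !fm_Re fmT -scalemx1 fmZ fm1 cM vnorm2_conj.
rewrite -mulrBr.
have -> : rho * fm v B - (zeta z * vnorm2 v + conjc (zeta z) * vnorm2 v) = rho * (fm v B - vnorm2 v) by rewrite /rho; ring.
apply: mulr_ge0; first by rewrite invr_ge0 ler0n.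
apply: mulr_le0; first exact: rho_le0.
by rewrite subr_le0 fm_B_le.
Qed.

Lemma psi_contr : opnorm_le1 psi.
Proof.
move=> v; set w := Si *m v.
have hv : v = S *m w by rewrite /w mulmxA SSi mul1mx.
have -> : psi *m v = (T + 1) *m w by rewrite /psi /w mulmxA.
rewrite {1}hv /S vnorm2_m1 vnorm2_p1 -subr_ge0.
set c := fm w T + conjc (fm w T).
have -> : vnorm2 (T *m w) - c + vnorm2 w - (vnorm2 (T *m w) + c + vnorm2 w) = - (c + c) by ring.
rewrite oppr_ge0 -[0](addr0 0); exact: lerD (fmT_le0 w) (fmT_le0 w).
Qed.

Lemma psi_noeig : ~~ eigenvalue psi 1.
Proof.
apply/eigenvalueP => -[u hu u0].
have h1 : u *m (T + 1) = u *m S.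
  have e : T + 1 = psi *m S by rewrite /psi -mulmxA SiS mulmx1.
  by rewrite e mulmxA hu scale1r.
have : u *m (T + 1 - S) = 0 by rewrite mulmxBr h1 subrr.
rewrite /S two_diff -scalemxAr mulmx1 => /eqP; rewrite scaler_eq0 pnatr_eq0 /=.
by apply/negP.
Qed.

End Alg.

Local Open Scope classical_set_scope.
Lemma cvg_mx_entries (K : numFieldType) (T : Type) (F : set_system T)
  (FF : Filter F) m p (f : T -> 'M[K]_(m,p)) (l : 'M[K]_(m,p)) :
  (forall i j, (fun x => f x i j) @ F --> l i j) -> f @ F --> l.
Proof.
move=> H; apply/cvgrPdist_lt => e e0.
have H2 : \forall x \near F, forall i j, `|l i j - f x i j| < e.
  apply: filter_forall => i; apply: filter_forall => j.
  exact: (cvgrPdist_lt _ _).1 (H i j) e e0.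
apply: filterS H2 => x Hx.
have : ball l e (f x) by split => // i j; exact: Hx.
by rewrite -ball_normE.
Qed.

Lemma derivable_mx_entries (K : numFieldType) (V : normedModType K) m p
  (M : V -> 'M[K]_(m,p)) t v :
  (forall i j, derivable (fun x => M x i j) t v) -> derivable M t v.
Proof.
move=> Mvt; apply/cvg_ex => /=.
exists (\matrix_(i < m, j < p) sval (cid ((cvg_ex _).1 (Mvt i j)))).
apply: cvg_mx_entries => i j; rewrite mxE.
have := svalP (cid ((cvg_ex _).1 (Mvt i j))).
apply: cvg_trans; apply: near_eq_cvg; near=> h.
by rewrite /= !mxE.
Unshelve. all: by end_near. Qed.

Section Der.
Variables (K : numFieldType) (V : normedModType K).

Lemma derivable_bigsum (I : Type) (r : seq I) (P : pred I) (F : I -> V -> K) x v :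
  (forall i, P i -> derivable (F i) x v) ->
  derivable (fun y => \sum_(i <- r | P i) F i y) x v.
Proof.
move=> H; elim: r => [|a r IH].
  under eq_fun do rewrite big_nil.
  exact: derivable_cst.
under eq_fun do rewrite big_cons.
case Pa: (P a) => //.
exact: derivableD (H a Pa) IH.
Qed.

Lemma derivable_bigprod (I : Type) (r : seq I) (P : pred I) (F : I -> V -> K) x v :
  (forall i, P i -> derivable (F i) x v) ->
  derivable (fun y => \prod_(i <- r | P i) F i y) x v.
Proof.
move=> H; elim: r => [|a r IH].
  under eq_fun do rewrite big_nil.
  exact: derivable_cst.
under eq_fun do rewrite big_cons.
case Pa: (P a) => //.
exact: derivableM (H a Pa) IH.
Qed.

Lemma derivable_det k (M : V -> 'M[K]_k) x v :
  (forall i j, derivable (fun y => M y i j) x v) ->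
  derivable (fun y => \det (M y)) x v.
Proof.
move=> H; rewrite /determinant.
apply: derivable_bigsum => s _.
apply: derivableM; first exact: derivable_cst.
exact: derivable_bigprod.
Qed.

End Der.

Lemma derivable_adj (K : numFieldType) (V : normedModType K) k (M : V -> 'M[K]_k) x v :
  (forall i j, derivable (fun y => M y i j) x v) ->
  forall i j, derivable (fun y => \adj (M y) i j) x v.
Proof.
move=> H i j; under eq_fun do rewrite mxE /cofactor.
apply: derivableM; first exact: derivable_cst.
apply: derivable_det => a b; under eq_fun do rewrite !mxE.
exact: H.
Qed.

Section Holo.
Variables (R : realType).
Local Notation K := (Cx R).

Lemma derivable_zeta (z : K) : z - 1 != 0 -> derivable (fun y : K^o => (zeta y : K^o)) z 1.
Proof.
move=> hz; rewrite /zeta.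
apply: derivableM.
  apply: derivableD; [exact: derivable_id | exact: derivable_cst].
apply: derivableV => //.
Qed.

Lemma derivable_Tentry n (A B c : 'M[K]_n) (z : K) i j : z - 1 != 0 ->
  derivable (fun y : K^o => ((Num.imaginary *: A + zeta y *: B + c) i j : K^o)) z 1.
Proof.
move=> hz; under eq_fun do rewrite !mxE.
apply: derivableD; last exact: derivable_cst.
apply: derivableD; first exact: derivable_cst.
apply: derivableM; last exact: derivable_cst.
exact: derivable_zeta.
Qed.
End Holo.


Section Final.
Variables (R : realType) (n : nat) (A B : 'M[Cx R]_n).
Hypotheses (hA : selfadj A) (hB : pos_contraction B).
Local Notation K := (Cx R).

Lemma near_disc (z : K) : in_disc z -> \forall y \near (z : K^o), in_disc y.
Proof.
move=> hz; have e0 : 0 < 1 - `|z| by rewrite subr_gt0.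
apply: filterS (near_ball (z : K^o) (1 - `|z|) e0) => y.
rewrite -ball_normE /ball_ /= /in_disc => hy.
have -> : y = z - (z - y) by rewrite opprB addrC subrK.
apply: le_lt_trans (ler_normB _ _) _.
by rewrite -(subrKC `|z| 1) ltrD2l.
Qed.

Lemma holo : holo_disc (fun z : K^o =>
  (Num.imaginary *: A + zeta z *: B + 1) *m invmx (Num.imaginary *: A + zeta z *: B - 1)).
Proof.
move=> z hz.
have hz1 : z - 1 != 0 := disc_neq1 hz.
pose F := fun y : K^o => (Num.imaginary *: A + zeta y *: B + 1) *m
   ((\det (Num.imaginary *: A + zeta y *: B - 1))^-1 *: \adj (Num.imaginary *: A + zeta y *: B - 1)).
apply: (@near_eq_derivable _ _ _ F).
  apply: filterS (near_disc hz) => y hy.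
  by rewrite /F /invmx (S_unit hA hB hy).
apply: derivable_mx_entries => i j.
rewrite /F; under eq_fun do rewrite mxE.
apply: derivable_bigsum => k _.
apply: derivableM; first exact: derivable_Tentry.
under eq_fun do rewrite mxE.
apply: derivableM.
  apply: derivableV.
    by have := S_unit hA hB hz; rewrite unitmxE unitfE.
  by apply: derivable_det => a b; exact: derivable_Tentry.
by apply: derivable_adj => a b; exact: derivable_Tentry.
Qed.

End Final.

End Helpers.
Import Helpers.

Theorem proposition4p4 (R : realType) (n : nat) (A B : 'M[Cx R]_n) :
  selfadj A -> pos_contraction B ->
  let T := fun z : Cx R => 'i *: A + zeta z *: B in
  (forall z : Cx R, in_disc z -> (T z - 1) \in unitmx) /\
  (let psi := fun z : (Cx R)^o => (T z + 1) *m invmx (T z - 1) in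
   classC psi /\
   forall z : Cx R, in_disc z ->
     ople (ReOp ((psi z + 1) *m invmx (psi z - 1))) 0 /\
     ople (ReOp (zeta z)%:M) (ReOp ((psi z + 1) *m invmx (psi z - 1)))).
Proof.
move=> hA hB T; split.
  by move=> z hz; exact: (S_unit hA hB hz).
move=> psi; split.
  split; first exact: (holo hA hB).
  split=> z hz; [exact: (psi_contr hA hB hz) | exact: (psi_noeig hA hB hz)].
by move=> z hz; split; [exact: (ReW_le0 hA hB hz) | exact: (ReW_ge hA hB hz)].
Qed.
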